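(* Let $X$ be a finite set with $|X|=n$, $0\notin X$, $W=X\cup\{0\}$. Let $\mathfrak{V}$ be a $\big(\binom{n}{2}_{\,n-2}\ \binom{n}{3}_{\,3}\big)$-configuration whose point set is $\mathcal{P}_2(X)$, and let $\mathfrak{M}$ be the structure with point set $\mathcal{P}_2(W)$ whose lines are the lines of $\mathfrak{V}$ together with all sets $\{\{0,x\},\{0,y\},\{x,y\}\}$ for distinct $x,y\in X$. Let $H$ be a hyperplane of $\mathfrak{M}$, and on $X$ define the equivalence relation $x\sim y$ iff $x=y$, or $x\neq y$ and $\{x,y\}\in H$. If $\mathfrak{a},\mathfrak{b}$ are equivalence classes of $\sim$ with $\{0,x\}\in H$ for all $x\in\mathfrak{a}\cup\mathfrak{b}$, then $\mathfrak{a}=\mathfrak{b}$.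
   Context: $\mathcal{P}_2(Y)$ denotes the set of $2$-element subsets of $Y$. A $(v_r\ b_k)$-configuration is a partial linear space with $v$ points and $b$ lines, each point on exactly $r$ lines and each line containing exactly $k$ points. A subspace is a set of points containing every line that meets it in at least two points; a hyperplane is a proper subspace meeting every line. (A point $x\in X$ is identified with the point $\{0,x\}$, so ''$\mathfrak{a}\subseteq H$'' means $\{0,x\}\in H$ for all $x\in\mathfrak{a}$.) *)

(* Defs.v *)
From mathcomp Require Import all_boot.
Set Implicit Arguments. Unset Strict Implicit. Unset Printing Implicit Defensive.

Definition P2 (Y : finType) : {set {set Y}} := [set A : {set Y} | #|A| == 2].

Definition partial_linear_space (T : finType) (P : {set T}) (L : {set {set T}}) :=
  (forall l, l \in L -> l \subset P /\ 1 < #|l|) /\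
  (forall l1 l2, l1 \in L -> l2 \in L -> l1 != l2 -> #|l1 :&: l2| <= 1).

Definition configuration (T : finType) (P : {set T}) (L : {set {set T}})
  (v r b k : nat) :=
  [/\ partial_linear_space P L, #|P| = v, #|L| = b,
      (forall p, p \in P -> #|[set l in L | p \in l]| = r) &
      (forall l, l \in L -> #|l| = k)].

Definition subspace (T : finType) (P : {set T}) (L : {set {set T}}) (S : {set T}) :=
  S \subset P /\ (forall l, l \in L -> 1 < #|l :&: S| -> l \subset S).

Definition hyperplane (T : finType) (P : {set T}) (L : {set {set T}}) (H : {set T}) :=
  [/\ subspace P L H, H \proper P & (forall l, l \in L -> l :&: H != set0)].

(* W = X ∪ {0} is modelled as option X, with 0 = None and x = Some x. *)
Definition embed_line (X : finType) (l : {set {set X}}) : {set {set option X}} :=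
  [set (@Some X) @: p | p : {set X} in l].

Definition tri_line (X : finType) (x y : X) : {set {set option X}} :=
  [set [set None; Some x]; [set None; Some y]; [set Some x; Some y]].

Definition M_lines (X : finType) (L : {set {set {set X}}}) : {set {set {set option X}}} :=
  [set embed_line l | l in L] :|: [set tri_line xy.1 xy.2 | xy : X * X & xy.1 != xy.2].

Definition simH (X : finType) (H : {set {set option X}}) (x y : X) : bool :=
  (x == y) || ((x != y) && ([set Some x; Some y] \in H)).

Definition simclass (X : finType) (H : {set {set option X}}) (x : X) : {set X} :=
  [set y | simH H x y].

(* Main.v *)
Require Import Defs.
From mathcomp Require Import all_boot.

Lemma key (X : finType) (L : {set {set {set X}}}) (H : {set {set option X}}) (u v : X) :
  hyperplane (P2 (option X)) (M_lines L) H ->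
  [set None; Some u] \in H -> [set None; Some v] \in H -> simH H u v.
Proof.
move=> [[_ Hsub] _ _] Hu Hv.
rewrite /simH; case: eqP => //= /eqP nuv.
have lin : tri_line u v \in M_lines L.
  rewrite /M_lines inE; apply/orP; right; apply/imsetP; exists (u, v) => //=.
  by rewrite inE.
have : tri_line u v \subset H.
  apply: (Hsub _ lin); apply/card_gt1P.
  exists [set None; Some u], [set None; Some v].
  split; [by rewrite inE Hu !inE eqxx | by rewrite inE Hv !inE eqxx !orbT |].
  apply/eqP => E.
  have : Some v \in [set None; Some u] by rewrite E !inE eqxx orbT.
  rewrite !inE /= => /eqP [] Evu; move: nuv; rewrite Evu eqxx //.
by move/subsetP; apply; rewrite !inE eqxx !orbT.
Qed.

Theorem lemma3p3 (X : finType) (n : nat) (L : {set {set {set X}}})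
  (H : {set {set option X}}) :
  #|X| = n ->
  configuration (P2 X) L 'C(n, 2) (n - 2) 'C(n, 3) 3 ->
  hyperplane (P2 (option X)) (M_lines L) H ->
  forall a b : {set X},
    (exists x, a = simclass H x) ->
    (exists y, b = simclass H y) ->
    (forall z, z \in a :|: b -> [set None; Some z] \in H) ->
    a = b.
Proof.
move=> _ _ hH a b [x ->] [y ->] h0.
have hx : [set None; Some x] \in H by apply: h0; rewrite !inE /simH eqxx.
have hy : [set None; Some y] \in H by apply: h0; rewrite !inE /simH eqxx orbT.
apply/setP => z; rewrite !inE.
apply/idP/idP => hz.
- apply: key hH hy _; apply: h0; by rewrite !inE hz.
- apply: key hH hx _; apply: h0; by rewrite !inE hz orbT.
Qed.
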